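(* Let $x^k\in\mathbb R^\ell$, let $\rho\in S_n$ be a permutation, and let $Q_1=(q_1,\dots,q_m)\in\mathbb R^{n\times m}$, $Q_2$, $\Lambda_1,\Lambda_2$ and $Z^k$ be as follows: $A(x^k)=(Q_1\;Q_2)\operatorname{diag}(\Lambda_1,\Lambda_2)(Q_1\;Q_2)^T$ with $(Q_1\;Q_2)$ orthogonal, $\Lambda_1=\operatorname{diag}(\lambda_{\rho_1}(x^k),\dots,\lambda_{\rho_m}(x^k))$, $\Lambda_2=\operatorname{diag}(\lambda_{\rho_{m+1}}(x^k),\dots,\lambda_{\rho_n}(x^k))$, and $Z^k=(Q_1\;Q_2)\operatorname{diag}(\Lambda^*,\Lambda_2)(Q_1\;Q_2)^T$ with $\Lambda^*=\operatorname{diag}(\lambda_1^*,\dots,\lambda_m^* )$. Let $x^{k+1}\in\mathbb R^\ell$ be the solution of the linear system $Bx^{k+1}=c$, where $c\in\mathbb R^\ell$ has entries $c_j=\langle Z^k-A_0,A_j\rangle_F$ (equivalently, $A(x^{k+1})$ is the point of the affine family $\{A(x):x\in\mathbb R^\ell\}$ closest to $Z^k$ in Frobenius norm). Then $$x^{k+1}=x^k-B^{-1}J_r(x^k)^T r(x^k,\rho)=x^k-B^{-1}\nabla F(x^k).$$ Consequently the Lift and Projection iteration ($x^k\mapsto$ lift to $Z^k$, then project) and the iteration $x^{k+1}=x^k-B^{-1}\nabla F(x^k)$ produce the same sequence of iterates from the same starting point (with the same choice of permutations).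
   Context: $A(x)=A_0+\sum_{i=1}^\ell x_iA_i$ for $x\in\mathbb R^\ell$, where $A_0,\dots,A_\ell\in\mathbb R^{n\times n}$ are linearly independent real symmetric matrices; $\lambda_1(x)\le\dots\le\lambda_n(x)$ are its eigenvalues. Given real numbers $\lambda_1^*\le\dots\le\lambda_m^*$ ($m\le n$) and $\rho\in S_n$: $r(x,\rho)\in\mathbb R^m$, $r_i=\lambda_{\rho_i}(x)-\lambda_i^*$; $F(x)=\frac12\|r(x,\rho)\|_2^2$. $\langle X,Y\rangle_F=\operatorname{Tr}(X^TY)$ is the Frobenius inner product. $B\in\mathbb R^{\ell\times\ell}$ is the Gram matrix $B_{ij}=\langle A_i,A_j\rangle_F$, $1\le i,j\le\ell$. $J_r(x)\in\mathbb R^{m\times\ell}$ is the matrix with entries $(J_r)_{ij}=q_i^TA_jq_i$, where $q_i$ is the unit eigenvector of $A(x)$ for $\lambda_{\rho_i}(x)$ (the $i$-th column of $Q_1$), and $\nabla F(x)=J_r(x)^Tr(x,\rho)$. *)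

(* Defs.v *)
From mathcomp Require Import all_boot all_order all_fingroup all_algebra.
Set Implicit Arguments. Unset Strict Implicit. Unset Printing Implicit Defensive.
Import Order.TTheory GRing.Theory Num.Theory.
Local Open Scope ring_scope.

Section Defs.
Variable R : realFieldType.

Definition frob (n : nat) (X Y : 'M[R]_n) : R := \tr (X^T *m Y).

(* The affine family A(x) = A_0 + sum_{i=1}^l x_i A_i ; A_i is [As i] (0-based). *)
Definition Aff (n l : nat) (A0 : 'M[R]_n) (As : 'I_l -> 'M[R]_n) (x : 'cV[R]_l)
  : 'M[R]_n := A0 + \sum_(i < l) x i 0 *: As i.

Definition lin_indep_family (n l : nat) (A0 : 'M[R]_n) (As : 'I_l -> 'M[R]_n) :=
  forall (c0 : R) (c : 'I_l -> R),
    c0 *: A0 + \sum_(i < l) c i *: As i = 0 -> c0 = 0 /\ forall i, c i = 0.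

Definition gram (n l : nat) (As : 'I_l -> 'M[R]_n) : 'M[R]_l :=
  \matrix_(i, j) frob (As i) (As j).

Definition sorted_eigenvalues (n : nat) (M : 'M[R]_n) (lam : 'I_n -> R) :=
  (forall i j : 'I_n, (i <= j)%N -> lam i <= lam j) /\
  char_poly M = \prod_(i < n) ('X - (lam i)%:P).

Definition orthogonalmx (n : nat) (Q : 'M[R]_n) := Q^T *m Q = 1%:M.

Definition resid (n m : nat) (Hm : (m <= n)%N) (lam : 'I_n -> R) (rho : 'S_n)
  (lamstar : 'I_m -> R) : 'cV[R]_m :=
  \col_(i < m) (lam (rho (widen_ord Hm i)) - lamstar i).

Definition Jr (n m l : nat) (Hm : (m <= n)%N) (Q : 'M[R]_n)
  (As : 'I_l -> 'M[R]_n) : 'M[R]_(m, l) :=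
  \matrix_(i < m, j < l)
     ((col (widen_ord Hm i) Q)^T *m As j *m col (widen_ord Hm i) Q) 0 0.

Definition gradF (n m l : nat) (Hm : (m <= n)%N) (Q : 'M[R]_n)
  (As : 'I_l -> 'M[R]_n) (lam : 'I_n -> R) (rho : 'S_n) (lamstar : 'I_m -> R)
  : 'cV[R]_l := (Jr Hm Q As)^T *m resid Hm lam rho lamstar.

(* Z^k = Q diag(Lambda^*, Lambda_2) Q^T *)
Definition liftZ (n m : nat) (Q : 'M[R]_n) (lam : 'I_n -> R) (rho : 'S_n)
  (lamstar : 'I_m -> R) : 'M[R]_n :=
  Q *m diag_mx (\row_(j < n)
        oapp lamstar (lam (rho j)) (insub (val j) : option 'I_m)) *m Q^T.
End Defs.

(* Main.v *)
Require Import Defs.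
From mathcomp Require Import all_boot all_order all_fingroup all_algebra.
Import Order.TTheory GRing.Theory Num.Theory.
Local Open Scope ring_scope.


Section H.
Variable R : realFieldType.

Lemma frobC n (X Y : 'M[R]_n) : frob X Y = frob Y X.
Proof. by rewrite /frob -mxtrace_tr trmx_mul trmxK. Qed.

Lemma frobDl n (X Y Z : 'M[R]_n) : frob (X + Y) Z = frob X Z + frob Y Z.
Proof. by rewrite /frob linearD /= mulmxDl mxtraceD. Qed.

Lemma frob_sumZl n l (c : 'I_l -> R) (M : 'I_l -> 'M[R]_n) Y :
  frob (\sum_i c i *: M i) Y = \sum_i c i * frob (M i) Y.
Proof.
rewrite /frob linear_sum /= mulmx_suml raddf_sum; apply: eq_bigr => i _.
by rewrite linearZ /= -scalemxAl mxtraceZ.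
Qed.

Lemma frob_sumZr n l (c : 'I_l -> R) (M : 'I_l -> 'M[R]_n) Y :
  frob Y (\sum_i c i *: M i) = \sum_i c i * frob Y (M i).
Proof.
rewrite frobC frob_sumZl; apply: eq_bigr => i _; rewrite frobC; done.
Qed.

Lemma frob_self_eq0 n (S : 'M[R]_n) : frob S S = 0 -> S = 0.
Proof.
rewrite /frob /mxtrace => H.
have H2 : \sum_i \sum_k S k i ^+ 2 = 0.
  rewrite -[RHS]H; apply: eq_bigr => i _; rewrite mxE; apply: eq_bigr => k _.
  by rewrite mxE expr2.
apply/matrixP => k i; rewrite mxE.
have Hi : \sum_k S k i ^+ 2 = 0.
  by apply: (psumr_eq0P _ H2) => // j _; apply: sumr_ge0 => k0 _; exact: sqr_ge0.
have : S k i ^+ 2 = 0.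
  by apply: (psumr_eq0P _ Hi) => // j _; exact: sqr_ge0.
by move/eqP; rewrite sqrf_eq0 => /eqP.
Qed.

Lemma gram_unit n l (A0 : 'M[R]_n) (As : 'I_l -> 'M[R]_n) :
  lin_indep_family A0 As -> gram As \in unitmx.
Proof.
move=> Hind; rewrite unitmxE unitfE; apply/negP => /det0P [v vn0 vB].
set S := \sum_i v 0 i *: As i.
have HS : frob S S = 0.
  transitivity ((v *m gram As *m v^T) 0 0); last by rewrite vB mul0mx mxE.
  rewrite frob_sumZl mxE.
  under eq_bigr do rewrite frob_sumZr mulr_sumr.
  under [RHS]eq_bigr do rewrite !mxE mulr_suml.
  rewrite [RHS]exchange_big /=; apply: eq_bigr => i _; apply: eq_bigr => j _.
  by rewrite !mxE mulrA [RHS]mulrAC.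
have S0 : S = 0 by apply: frob_self_eq0.
have [|_ Hc] := Hind 0 (fun i => v 0 i); first by rewrite scale0r add0r.
have : v = 0.
  by apply/matrixP => a b; rewrite (ord1 a) mxE; apply: Hc.
by move/eqP; rewrite (negPf vn0).
Qed.

Lemma quad n (Q A : 'M[R]_n) k :
  (Q^T *m A *m Q) k k = ((col k Q)^T *m A *m col k Q) 0 0.
Proof.
rewrite !mxE; apply: eq_bigr => a _; rewrite !mxE; congr (_ * _).
by apply: eq_bigr => b _; rewrite !mxE.
Qed.
End H.

Theorem mainTheorem2 (R : realFieldType) (n m l : nat) (Hm : (m <= n)%N)
  (A0 : 'M[R]_n) (As : 'I_l -> 'M[R]_n)
  (HA0sym : A0^T = A0) (HAsym : forall i, (As i)^T = As i)
  (Hindep : lin_indep_family A0 As)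
  (lamstar : 'I_m -> R)
  (Hlamstar : forall i j : 'I_m, (i <= j)%N -> lamstar i <= lamstar j)
  (xk : 'cV[R]_l) (lam : 'I_n -> R)
  (Hlam : sorted_eigenvalues (Aff A0 As xk) lam)
  (rho : 'S_n) (Q : 'M[R]_n) (HQ : orthogonalmx Q)
  (Hdecomp : Aff A0 As xk = Q *m diag_mx (\row_(j < n) lam (rho j)) *m Q^T)
  (xk1 : 'cV[R]_l)
  (Hxk1 : gram As *m xk1 =
          \col_(j < l) frob (liftZ Q lam rho lamstar - A0) (As j)) :
  xk1 = xk - invmx (gram As) *m ((Jr Hm Q As)^T *m resid Hm lam rho lamstar)
  /\ xk1 = xk - invmx (gram As) *m gradF Hm Q As lam rho lamstar.

Proof.
set e : 'rV[R]_n := \row_j (oapp lamstar (lam (rho j)) (insub (val j) : option 'I_m) - lam (rho j)).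
have HL : liftZ Q lam rho lamstar = Aff A0 As xk + Q *m diag_mx e *m Q^T.
  rewrite Hdecomp -mulmxDl -mulmxDr /liftZ; congr (_ *m _ *m _).
  apply/matrixP => i j; rewrite !mxE.
  by case: (i == j); rewrite ?mulr0n ?mulr1n ?addr0 // addrC subrK.
have HZ : liftZ Q lam rho lamstar - A0 = \sum_i xk i 0 *: As i + Q *m diag_mx e *m Q^T.
  by rewrite HL /Aff addrAC [A0 + _]addrC addrK.
have Hc : \col_(j < l) frob (liftZ Q lam rho lamstar - A0) (As j)
   = gram As *m xk - (Jr Hm Q As)^T *m resid Hm lam rho lamstar.
  apply/matrixP => j k; rewrite (ord1 k) mxE [RHS]mxE HZ frobDl frob_sumZl.
  congr (_ + _).
    by rewrite mxE; apply: eq_bigr => i _; rewrite mxE frobC mulrC.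
  rewrite /frob !trmx_mul tr_diag_mx trmxK -!mulmxA mxtrace_mulC -!mulmxA.
  rewrite mul_diag_mx /mxtrace.
  rewrite (bigID (fun k : 'I_n => (k < m)%N)) /= [X in _ + X]big1; last first.
    move=> k0 Hk; rewrite !mxE; case: insubP => [i0 Hi0 _|_] /=.
      by rewrite Hi0 in Hk.
    by rewrite subrr mul0r.
  rewrite addr0 (big_ord_narrow Hm) [RHS]mxE [X in - X]mxE -sumrN.
  apply: eq_bigr => i _.
  rewrite [LHS]mxE mulmxA quad [e _ _]mxE [(_^T) _ _]mxE [Jr _ _ _ _ _]mxE [resid _ _ _ _ _ _]mxE.
  case: insubP => [i0 _ Hv|]; last by rewrite /= ltn_ord.
  have -> : i0 = i by apply: val_inj; rewrite Hv.
  by rewrite /= mulrC -mulrN opprB.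
have HB : gram As \in unitmx by apply: gram_unit Hindep.
have E : xk1 = xk - invmx (gram As) *m ((Jr Hm Q As)^T *m resid Hm lam rho lamstar).
  rewrite -[xk1](mulKmx HB) Hxk1 Hc mulmxBr mulKmx //.
by split.
Qed.
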